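(* Let $(\zeta,x,y)$ be isothermal boundary-compatible toroidal coordinates on $\widetilde Q$, and let $\bm u_\zeta$ be a vector field on $D$ tangent to $\partial D$. With $\bm r=x\,\partial_x+y\,\partial_y$ and $\bm N_\zeta$ the shift vector of $(\zeta,x,y)$, we have $\bm r\cdot(\bm u_\zeta+\bm N_\zeta)=0$ on $\partial D$, where $\cdot$ is the standard Euclidean dot product on $\mathbb{R}^2$.
   Context: $D$ is the closed unit disc. $Q\subset\mathbb{R}^3$ is a toroidal domain: a submanifold with boundary with an orientation-preserving diffeomorphism $(\zeta,x,y):Q\to S^1\times D$; $\widetilde Q$ is its universal cover with pulled-back Euclidean metric $\widetilde g$ and lifted toroidal coordinates $(\zeta,x,y):\widetilde Q\to\mathbb{R}\times D$; $I_\zeta:D\to\widetilde Q$, $I_\zeta(x,y)=(\zeta,x,y)$. Hypersurface metric $h_\zeta=I_\zeta^*\widetilde g$; shift vector $\bm N_\zeta$ is the vector field on $D$ with $\iota_{\bm N_\zeta}h_\zeta=I_\zeta^*(\iota_{\partial_\zeta}\widetilde g)$. The coordinates are boundary-compatible if at every point of $\partial\widetilde Q$ the outward unit normal $\bm n$ satisfies $d\zeta(\bm n)=0$, and isothermal if $h_\zeta=f_\zeta(dx^2+dy^2)$ for some nowhere-vanishing function $f_\zeta$. *)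

(* Defs.v *)
From HB Require Import structures.
From mathcomp Require Import all_boot all_order all_algebra.
From mathcomp Require Import all_classical all_reals all_analysis.
Set Implicit Arguments. Unset Strict Implicit. Unset Printing Implicit Defensive.
Import Order.TTheory GRing.Theory Num.Theory.
Import numFieldNormedType.Exports.
Local Open Scope ring_scope.

Section Toroidal.
Variable R : realType.

Definition pt (z x y : R) : 'rV[R]_3 := \row_(i < 3) nth 0 [:: z; x; y] i.

Definition inD (x y : R) : Prop := x ^+ 2 + y ^+ 2 <= 1.
Definition onbD (x y : R) : Prop := x ^+ 2 + y ^+ 2 = 1.

(* Standard basis vectors e_0 = d/dzeta, e_1 = d/dx, e_2 = d/dy of coordinate space. *)
Definition ebasis (i : 'I_3) : 'rV[R]_3 := delta_mx 0 i.

Definition dot3 (u v : 'rV[R]_3) : R := \sum_(i < 3) u 0 i * v 0 i.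
Definition dot2 (u v : 'rV[R]_2) : R := \sum_(i < 2) u 0 i * v 0 i.

Definition vec2 (a b : R) : 'rV[R]_2 := \row_(i < 2) nth 0 [:: a; b] i.

(* Psi : R x D -> R^3 is the inverse of the lifted toroidal coordinates
   (zeta,x,y), composed with the covering map Qtilde -> Q and the inclusion
   Q -> R^3.  Its partial derivatives d_i Psi are the images in R^3 of the
   coordinate vector fields d_zeta, d_x, d_y. *)
Definition dPsi (Psi : 'rV[R]_3 -> 'rV[R]_3) (i : 'I_3) (z x y : R) : 'rV[R]_3 :=
  'D_(ebasis i) Psi (pt z x y).

Definition jac (Psi : 'rV[R]_3 -> 'rV[R]_3) (z x y : R) : 'M[R]_3 :=
  \matrix_(i < 3, j < 3) dPsi Psi i z x y 0 j.

(* Psi describes toroidal coordinates on a toroidal domain Q (S^1 = R / 2 pi Z):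
   Psi is smooth (here: differentiable, on an extension to R^3), 2pi-periodic in
   zeta, injective modulo the period on R x D (so it descends to an embedding of
   S^1 x D onto Q), an immersion (invertible Jacobian), orientation preserving. *)
Definition toroidal_coords (Psi : 'rV[R]_3 -> 'rV[R]_3) : Prop :=
  [/\ (forall p, differentiable Psi p),
      (forall z x y, Psi (pt (z + 2 * pi) x y) = Psi (pt z x y)),
      (forall z1 x1 y1 z2 x2 y2, inD x1 y1 -> inD x2 y2 ->
          Psi (pt z1 x1 y1) = Psi (pt z2 x2 y2) ->
          [/\ x1 = x2, y1 = y2 & exists k : int, z2 = z1 + k%:~R * (2 * pi)]) &
      (forall z x y, inD x y -> 0 < \det (jac Psi z x y))].

(* Tangent vector of Qtilde with coordinate components n = (n_zeta, n_x, n_y),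
   realised as a vector of R^3 (the metric gtilde is the pulled back Euclidean one). *)
Definition realise (Psi : 'rV[R]_3 -> 'rV[R]_3) (z x y : R) (n : 'rV[R]_3) : 'rV[R]_3 :=
  \sum_(i < 3) n 0 i *: dPsi Psi i z x y.

(* n (in coordinate components) is the outward unit normal of dQtilde at the
   boundary point (z,x,y) (x^2+y^2 = 1): unit, gtilde-orthogonal to the tangent
   space of the boundary (spanned by d_zeta and -y d_x + x d_y), and pointing out
   of Qtilde (its (x,y)-part has positive radial component). *)
Definition outward_unit_normal (Psi : 'rV[R]_3 -> 'rV[R]_3) (z x y : R) (n : 'rV[R]_3) : Prop :=
  [/\ dot3 (realise Psi z x y n) (realise Psi z x y n) = 1,
      dot3 (realise Psi z x y n) (dPsi Psi 0 z x y) = 0,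
      dot3 (realise Psi z x y n) ((- y) *: dPsi Psi 1 z x y + x *: dPsi Psi 2%:R z x y) = 0 &
      0 < x * n 0 1 + y * n 0 2%:R].

(* Boundary compatible: d zeta (n) = 0 for the outward unit normal n at every
   boundary point of Qtilde (d zeta (n) is the zeta-component of n). *)
Definition boundary_compatible (Psi : 'rV[R]_3 -> 'rV[R]_3) : Prop :=
  forall z x y (n : 'rV[R]_3), onbD x y -> outward_unit_normal Psi z x y n -> n 0 0 = 0.

(* Hypersurface metric h_zeta = I_zeta^* gtilde, on tangent vectors of D. *)
Definition hmetric (Psi : 'rV[R]_3 -> 'rV[R]_3) (z x y : R) (v w : 'rV[R]_2) : R :=
  dot3 (v 0 0 *: dPsi Psi 1 z x y + v 0 1 *: dPsi Psi 2%:R z x y)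
       (w 0 0 *: dPsi Psi 1 z x y + w 0 1 *: dPsi Psi 2%:R z x y).

Definition isothermal (Psi : 'rV[R]_3 -> 'rV[R]_3) : Prop :=
  exists f : R -> R -> R -> R, forall z x y, inD x y ->
    f z x y != 0 /\ forall v w, hmetric Psi z x y v w = f z x y * dot2 v w.

(* N is the shift vector: iota_{N_zeta} h_zeta = I_zeta^* (iota_{d_zeta} gtilde),
   i.e. h_zeta(N_zeta, w) = gtilde(d_zeta, dI_zeta w) for all w, at every point of D. *)
Definition shift_vector (Psi : 'rV[R]_3 -> 'rV[R]_3) (N : R -> R -> R -> 'rV[R]_2) : Prop :=
  forall z x y, inD x y -> forall w : 'rV[R]_2,
    hmetric Psi z x y (N z x y) w =
    dot3 (dPsi Psi 0 z x y) (w 0 0 *: dPsi Psi 1 z x y + w 0 1 *: dPsi Psi 2%:R z x y).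

Definition tangent_to_bD (u : R -> R -> R -> 'rV[R]_2) : Prop :=
  forall z x y, onbD x y -> exists l : R, u z x y = l *: vec2 (- y) x.

End Toroidal.

(* Main.v *)
Require Import Defs.
From HB Require Import structures.
From mathcomp Require Import all_boot all_order all_algebra.
From mathcomp Require Import all_classical all_reals all_analysis.
From mathcomp Require Import ring lra.
Import Order.TTheory GRing.Theory Num.Theory.
Local Open Scope ring_scope.

Section Helpers.
Variable R : realType.
Implicit Types (a b c u v : 'rV[R]_3).

Definition cmb a b c (al be ga : R) : 'rV[R]_3 := al *: a + be *: b + ga *: c.

Lemma dot3_cmb a b c al be ga al' be' ga' :
  dot3 (cmb a b c al be ga) (cmb a b c al' be' ga') =
  al * al' * dot3 a a + be * be' * dot3 b b + ga * ga' * dot3 c c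
  + (al * be' + be * al') * dot3 a b + (al * ga' + ga * al') * dot3 a c
  + (be * ga' + ga * be') * dot3 b c.
Proof. rewrite /dot3 /cmb !big_ord_recr !big_ord0 /= !mxE; ring. Qed.

Lemma dot3Zl k u v : dot3 (k *: u) v = k * dot3 u v.
Proof. rewrite /dot3 !big_ord_recr !big_ord0 /= !mxE; ring. Qed.
Lemma dot3Zr k u v : dot3 u (k *: v) = k * dot3 u v.
Proof. rewrite /dot3 !big_ord_recr !big_ord0 /= !mxE; ring. Qed.
Lemma dot3C u v : dot3 u v = dot3 v u.
Proof. rewrite /dot3 !big_ord_recr !big_ord0 /=; ring. Qed.

Lemma dot3_ge0 u : 0 <= dot3 u u.
Proof. by rewrite /dot3; apply: sumr_ge0 => i _; rewrite -expr2 sqr_ge0. Qed.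

Lemma dot3_eq0 u : dot3 u u = 0 -> u = 0.
Proof.
move=> h; apply/rowP => j; rewrite mxE.
have H : u 0 j * u 0 j = 0.
  apply: (@psumr_eq0P R _ xpredT (fun i => u 0 i * u 0 i)) => //.
  by move=> i _; rewrite -expr2 sqr_ge0.
by apply/eqP; rewrite -sqrf_eq0 expr2 H.
Qed.

Lemma dot2E (v w : 'rV[R]_2) : dot2 v w = v 0 0 * w 0 0 + v 0 1 * w 0 1.
Proof.
rewrite /dot2 !big_ord_recr big_ord0 /= add0r.
by congr (_ * _ + _ * _); congr (_ _ _); apply/val_inj.
Qed.

Lemma vec2E (p q : R) : (vec2 p q) 0 0 = p /\ (vec2 p q) 0 1 = q.
Proof. by rewrite !mxE. Qed.

Lemma ordE0 : widen_ord (m:=3) (leqnSn 2) (widen_ord (m:=2) (leqnSn 1) ord_max) = 0.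
Proof. by apply/val_inj. Qed.
Lemma ordE1 : widen_ord (m:=3) (leqnSn 2) ord_max = 1.
Proof. by apply/val_inj. Qed.
Lemma ordE2 : ord_max = 2%:R :> 'I_3.
Proof. by apply/val_inj. Qed.
Definition ordE := (ordE0, ordE1, ordE2).


Lemma indep (D : 'I_3 -> 'rV[R]_3) al be ga :
  0 < \det (\matrix_(i < 3, j < 3) D i 0 j) ->
  cmb (D 0) (D 1) (D 2%:R) al be ga = 0 ->
  [/\ al = 0, be = 0 & ga = 0].
Proof.
move=> hdet hc.
have hv : pt al be ga *m (\matrix_(i < 3, j < 3) D i 0 j) = 0.
  apply/rowP => j; rewrite !mxE !big_ord_recr big_ord0 /= add0r !mxE /=.
  rewrite !ordE.
  have := congr1 (fun M : 'M[R]_(1,3) => M 0 j) hc; rewrite /cmb !mxE => ->.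
  by rewrite ?mxE.
have [h0|hne] := eqVneq (pt al be ga) 0.
  have := congr1 (fun M : 'rV[R]_3 => M 0 0) h0; have := congr1 (fun M : 'rV[R]_3 => M 0 1) h0.
  have := congr1 (fun M : 'rV[R]_3 => M 0 2%:R) h0. by rewrite !mxE /=.
have : \det (\matrix_(i < 3, j < 3) D i 0 j) == 0 by apply/det0P; exists (pt al be ga).
by rewrite (gt_eqF hdet).
Qed.

Lemma sum_pt (D : 'I_3 -> 'rV[R]_3) n0 n1 n2 :
  \sum_(i < 3) (pt n0 n1 n2) 0 i *: D i = cmb (D 0) (D 1) (D 2%:R) n0 n1 n2.
Proof. by rewrite !big_ord_recr big_ord0 /= add0r !mxE /= !ordE. Qed.

Lemma cmbZ a b c m al be ga :
  cmb a b c (al * m) (be * m) (ga * m) = m *: cmb a b c al be ga.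
Proof. by rewrite /cmb !scalerDr !scalerA ![m * _]mulrC. Qed.

Lemma key (a b c : 'rV[R]_3) (x y f : R) :
  x ^+ 2 + y ^+ 2 = 1 -> f != 0 -> dot3 b b = f -> dot3 c c = f -> dot3 b c = 0 ->
  (forall al be ga, cmb a b c al be ga = 0 -> [/\ al = 0, be = 0 & ga = 0]) ->
  (forall n0 n1 n2, dot3 (cmb a b c n0 n1 n2) (cmb a b c n0 n1 n2) = 1 ->
     dot3 (cmb a b c n0 n1 n2) a = 0 ->
     dot3 (cmb a b c n0 n1 n2) (cmb a b c 0 (- y) x) = 0 ->
     0 < x * n1 + y * n2 -> n0 = 0) ->
  x * dot3 a b + y * dot3 a c = 0.
Proof.
move=> hxy f0 hbb hcc hbc hind hnorm.
have ea : a = cmb a b c 1 0 0 by rewrite /cmb scale1r !scale0r !addr0.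
have hsf : ((x * dot3 a c - y * dot3 a b) / f) * f = x * dot3 a c - y * dot3 a b
  by rewrite divfK.
move: ((x * dot3 a c - y * dot3 a b) / f) hsf => s hsf.
have hG : dot3 a a - s * (x * dot3 a c - y * dot3 a b)
     = dot3 (cmb a b c 1 (s * y) (- (s * x))) (cmb a b c 1 (s * y) (- (s * x))).
  rewrite dot3_cmb hbb hcc hbc.
  transitivity (dot3 a a + s * (s * f) * (x ^+ 2 + y ^+ 2) - 2 * s * (x * dot3 a c - y * dot3 a b)).
    by rewrite hsf hxy; ring.
  ring.
have G0 : (dot3 a a - s * (x * dot3 a c - y * dot3 a b)) != 0.
  apply/eqP => G0; move: hG; rewrite G0 => /esym /dot3_eq0 /hind [] h1 _ _.
  by move: (@oner_neq0 R); rewrite h1 eqxx.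
have hkG : (x * dot3 a b + y * dot3 a c) / (dot3 a a - s * (x * dot3 a c - y * dot3 a b)) * (dot3 a a - s * (x * dot3 a c - y * dot3 a b)) = x * dot3 a b + y * dot3 a c by rewrite divfK.
move: ((x * dot3 a b + y * dot3 a c) / (dot3 a a - s * (x * dot3 a c - y * dot3 a b))) hkG => k hkG.
have hrad : x * (x - k * s * y) + y * (y + k * s * x) = 1.
  rewrite -hxy; ring.
have Q0 : dot3 (cmb a b c (- k) (x - k * s * y) (y + k * s * x)) (cmb a b c (- k) (x - k * s * y) (y + k * s * x)) != 0.
  apply/eqP => /dot3_eq0 /hind [] _ hb hg.
  by move: hrad; rewrite hb hg !mulr0 addr0 => /esym /eqP; rewrite oner_eq0.
have e1 : dot3 (cmb a b c (- k) (x - k * s * y) (y + k * s * x)) a = 0.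
  rewrite [X in dot3 _ X]ea dot3_cmb hbb hcc hbc.
  transitivity ((x * dot3 a b + y * dot3 a c) - k * (dot3 a a - s * (x * dot3 a c - y * dot3 a b))).
    ring.
  by rewrite hkG subrr.
have e2 : dot3 (cmb a b c (- k) (x - k * s * y) (y + k * s * x)) (cmb a b c 0 (- y) x) = 0.
  rewrite dot3_cmb hbb hcc hbc.
  transitivity (k * (s * f) * (x ^+ 2 + y ^+ 2) - k * (x * dot3 a c - y * dot3 a b)).
    ring.
  by rewrite hsf hxy mulr1 subrr.
have Qpos : 0 < dot3 (cmb a b c (- k) (x - k * s * y) (y + k * s * x)) (cmb a b c (- k) (x - k * s * y) (y + k * s * x)) by rewrite lt_neqAle eq_sym Q0 dot3_ge0.
have mpos : 0 < Num.sqrt (dot3 (cmb a b c (- k) (x - k * s * y) (y + k * s * x)) (cmb a b c (- k) (x - k * s * y) (y + k * s * x))) by rewrite sqrtr_gt0.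
have m2 : Num.sqrt (dot3 (cmb a b c (- k) (x - k * s * y) (y + k * s * x)) (cmb a b c (- k) (x - k * s * y) (y + k * s * x))) ^+ 2 = dot3 (cmb a b c (- k) (x - k * s * y) (y + k * s * x)) (cmb a b c (- k) (x - k * s * y) (y + k * s * x)) by rewrite sqr_sqrtr // ltW.
move: (Num.sqrt (dot3 (cmb a b c (- k) (x - k * s * y) (y + k * s * x)) (cmb a b c (- k) (x - k * s * y) (y + k * s * x)))) mpos m2 => m mpos m2.
have m0 : m != 0 by rewrite gt_eqF.
have := hnorm (- k * m^-1) ((x - k * s * y) * m^-1) ((y + k * s * x) * m^-1).
rewrite !cmbZ !dot3Zl dot3Zr e1 e2 !mulr0.
have h1 : m^-1 * (m^-1 * dot3 (cmb a b c (- k) (x - k * s * y) (y + k * s * x)) (cmb a b c (- k) (x - k * s * y) (y + k * s * x))) = 1 by rewrite -m2; field.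
move=> /(_ h1 erefl erefl) h.
have er : x * ((x - k * s * y) * m^-1) + y * ((y + k * s * x) * m^-1) = m^-1.
  by rewrite -[RHS]mul1r -hrad; ring.
move: h; rewrite er invr_gt0 => /(_ mpos) /eqP.
rewrite mulf_eq0 invr_eq0 (negbTE m0) orbF oppr_eq0 => /eqP k0.
by rewrite -hkG k0 mul0r.
Qed.

End Helpers.
Arguments dot3_cmb {R}. Arguments dot3Zl {R}. Arguments dot3Zr {R}. Arguments dot3C {R}.
Arguments dot3_ge0 {R}. Arguments dot3_eq0 {R}. Arguments dot2E {R}. Arguments indep {R}.
Arguments sum_pt {R}. Arguments key {R}. Arguments cmb {R}.

Theorem lemma4 (R : realType) (Psi : 'rV[R]_3 -> 'rV[R]_3)
  (N u : R -> R -> R -> 'rV[R]_2) :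
  toroidal_coords Psi -> isothermal Psi -> boundary_compatible Psi ->
  shift_vector Psi N -> tangent_to_bD u ->
  forall z x y : R, onbD x y -> dot2 (vec2 x y) (u z x y + N z x y) = 0.
Proof.
move=> [_ _ _ hdet] [f hf] hbc hsh htan z x y hxy.
have hD : inD x y by rewrite /inD hxy.
have [f0 hfe] := hf z x y hD.
have hs : forall w : 'rV[R]_2, f z x y * dot2 (N z x y) w =
    dot3 (dPsi Psi 0 z x y) (w 0 0 *: dPsi Psi 1 z x y + w 0 1 *: dPsi Psi 2%:R z x y).
  by move=> w; rewrite -hfe hsh.
have hdz := hdet z x y hD.
have hb : forall n, outward_unit_normal Psi z x y n -> n 0 0 = 0.
  by move=> n; apply: hbc.
rewrite /outward_unit_normal /realise in hb.
rewrite /hmetric in hfe. rewrite /jac in hdz.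
have [l hl] := htan z x y hxy.
rewrite dot2E hl.
move: (N z x y) hs => Nv hs.
move: hfe hs hdz hb. move: (dPsi Psi) => D hfe hs hdz hb.
have hbb : dot3 (D 1 z x y) (D 1 z x y) = f z x y.
  have := hfe (vec2 1 0) (vec2 1 0); rewrite dot2E !mxE /= scale1r scale0r addr0 => ->.
  by rewrite mulr1 mulr0 addr0 mulr1.
have hcc : dot3 (D 2%:R z x y) (D 2%:R z x y) = f z x y.
  have := hfe (vec2 0 1) (vec2 0 1); rewrite dot2E !mxE /= scale1r scale0r add0r => ->.
  by rewrite mulr1 mulr0 add0r mulr1.
have hbc0 : dot3 (D 1 z x y) (D 2%:R z x y) = 0.
  have := hfe (vec2 1 0) (vec2 0 1); rewrite dot2E !mxE /= !scale1r !scale0r add0r addr0 => ->.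
  by rewrite mulr1 mulr0 addr0 mulr0.
have hN1 : f z x y * Nv 0 0 = dot3 (D 0 z x y) (D 1 z x y).
  have := hs (vec2 1 0); rewrite dot2E !mxE /= scale1r scale0r addr0 => <-.
  by rewrite mulr1 mulr0 addr0.
have hN2 : f z x y * Nv 0 1 = dot3 (D 0 z x y) (D 2%:R z x y).
  have := hs (vec2 0 1); rewrite dot2E !mxE /= scale1r scale0r add0r => <-.
  by rewrite mulr1 mulr0 add0r.
have hP : x * dot3 (D 0 z x y) (D 1 z x y) + y * dot3 (D 0 z x y) (D 2%:R z x y) = 0.
  apply: (key (D 0 z x y) (D 1 z x y) (D 2%:R z x y) x y (f z x y) hxy f0 hbb hcc hbc0).
    by move=> al be ga hc; apply: (indep (fun i => D i z x y)).
  move=> n0 n1 n2 h1 h2 h3 h4.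
  have := hb (pt n0 n1 n2); rewrite !mxE /=; apply.
  rewrite (sum_pt (fun i => D i z x y)).
  have -> : - y *: D 1 z x y + x *: D 2%:R z x y = cmb (D 0 z x y) (D 1 z x y) (D 2%:R z x y) 0 (- y) x.
    by rewrite /cmb scale0r add0r.
  by split.
rewrite !mxE /= addrC.
apply: (mulfI f0); rewrite mulr0.
transitivity (x * (f z x y * Nv 0 0) + y * (f z x y * Nv 0 1)); first ring.
by rewrite hN1 hN2.
Qed.
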